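(* Let $P$ be a finite poset and $R$ a restriction function on $P$. Then for every $p\in P$ and every $k\in R(p)$ there exists $f\in\mathrm{Inc}^R(P)$ with $f(p)=k$ if and only if $R$ is consistent.
   Context: A restriction function assigns to each $p\in P$ a nonempty finite set $R(p)\subseteq\mathbb{Z}$. $\mathrm{Inc}^R(P)$ is the set of $f:P\to\mathbb{Z}$ with $f(p)\in R(p)$ for all $p$ and $p_1<p_2\Rightarrow f(p_1)<f(p_2)$. $R$ is consistent if for every cover relation $x\lessdot y$ in $P$, $\min R(x)<\min R(y)$ and $\max R(x)<\max R(y)$. *)

(* Defs.v *)
From HB Require Import structures.
From mathcomp Require Import all_boot all_order all_algebra.
From mathcomp Require Export finmap.
Set Implicit Arguments. Unset Strict Implicit. Unset Printing Implicit Defensive.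
Import Order.TTheory GRing.Theory Num.Theory.
Open Scope fset_scope.

(* minimum / maximum of a finite set of integers (meaningful for nonempty A) *)
Definition fmin (A : {fset int}) : int :=
  \big[Num.min/head 0%R (enum_fset A)]_(a <- enum_fset A) a.
Definition fmax (A : {fset int}) : int :=
  \big[Num.max/head 0%R (enum_fset A)]_(a <- enum_fset A) a.

Section Restr.
Context {disp : Order.disp_t} {P : finPOrderType disp}.

Definition covers (x y : P) : Prop :=
  (x < y)%O /\ ~ (exists z : P, (x < z)%O /\ (z < y)%O).

Definition in_IncR (R : P -> {fset int}) (f : P -> int) : Prop :=
  (forall p, f p \in R p) /\ (forall p1 p2 : P, (p1 < p2)%O -> (f p1 < f p2)%R).

Definition consistent (R : P -> {fset int}) : Prop :=
  forall x y : P, covers x y ->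
    (fmin (R x) < fmin (R y))%R /\ (fmax (R x) < fmax (R y))%R.
End Restr.

(* Main.v *)
Require Import Defs.
From HB Require Import structures.
From mathcomp Require Import all_boot all_order all_algebra finmap.
Import Order.TTheory GRing.Theory Num.Theory.

Lemma bigmin_mem (s : seq int) (i : int) :
  \big[Num.min/i]_(a <- s) a \in i :: s.
Proof.
elim: s => [|x s IH]; first by rewrite big_nil inE eqxx.
rewrite big_cons; set m := \big[_/_]_(_ <- _) _ in IH *.
rewrite /Num.min /Order.min; case: ifP => _.
  by rewrite !inE eqxx !orbT.
by move: IH; rewrite !inE => /orP [->|->]; rewrite ?orbT.
Qed.

Lemma bigmax_mem (s : seq int) (i : int) :
  \big[Num.max/i]_(a <- s) a \in i :: s.
Proof.
elim: s => [|x s IH]; first by rewrite big_nil inE eqxx.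
rewrite big_cons; set m := \big[_/_]_(_ <- _) _ in IH *.
rewrite /Num.max /Order.max; case: ifP => _.
  by move: IH; rewrite !inE => /orP [->|->]; rewrite ?orbT.
by rewrite !inE eqxx !orbT.
Qed.

Lemma bigmin_le (s : seq int) (i a : int) :
  a \in i :: s -> (\big[Num.min/i]_(a <- s) a <= a)%R.
Proof.
elim: s => [|x s IH]; first by rewrite big_nil inE => /eqP ->.
rewrite big_cons ge_min !inE => /orP [Ha|/orP [Ha|Ha]].
- by rewrite IH ?orbT // inE Ha.
- by rewrite (eqP Ha) lexx.
- by rewrite IH ?orbT // inE Ha orbT.
Qed.

Lemma bigmax_ge (s : seq int) (i a : int) :
  a \in i :: s -> (a <= \big[Num.max/i]_(a <- s) a)%R.
Proof.
elim: s => [|x s IH]; first by rewrite big_nil inE => /eqP ->.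
rewrite big_cons le_max !inE => /orP [Ha|/orP [Ha|Ha]].
- by rewrite IH ?orbT // inE Ha.
- by rewrite (eqP Ha) lexx.
- by rewrite IH ?orbT // inE Ha orbT.
Qed.

Lemma enum_ne (A : {fset int}) : A != fset0 ->
  exists x s, enum_fset A = x :: s.
Proof.
case E: (enum_fset A) => [|x s]; last by exists x, s.
move=> H; exfalso; move/negP: H; apply; apply/eqP/fsetP => y.
by rewrite inE; change ((y \in enum_fset A) = false); rewrite E.
Qed.

Lemma fmin_mem A : A != fset0 -> fmin A \in A.
Proof.
move=> /enum_ne [x [s E]]; change (fmin A \in enum_fset A).
rewrite /fmin E /=.
have := bigmin_mem (x :: s) x; rewrite inE => /orP [/eqP->|//]; by rewrite inE eqxx.
Qed.

Lemma fmax_mem A : A != fset0 -> fmax A \in A.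
Proof.
move=> /enum_ne [x [s E]]; change (fmax A \in enum_fset A).
rewrite /fmax E /=.
have := bigmax_mem (x :: s) x; rewrite inE => /orP [/eqP->|//]; by rewrite inE eqxx.
Qed.

Lemma fmin_le A a : a \in A -> (fmin A <= a)%R.
Proof.
change (a \in A) with (a \in enum_fset A); rewrite /fmin.
case E: (enum_fset A) => [|x s] //= Ha.
by apply: bigmin_le; rewrite inE Ha orbT.
Qed.

Lemma fmax_ge A a : a \in A -> (a <= fmax A)%R.
Proof.
change (a \in A) with (a \in enum_fset A); rewrite /fmax.
case E: (enum_fset A) => [|x s] //= Ha.
by apply: bigmax_ge; rewrite inE Ha orbT.
Qed.

Lemma cover_chain (d : Order.disp_t) (P : finPOrderType d) (g : P -> int) :
  (forall x y, covers x y -> (g x < g y)%R) ->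
  forall x y : P, (x < y)%O -> (g x < g y)%R.
Proof.
move=> Hc.
suff H : forall n (x y : P), #|[set z | (x < z)%O && (z < y)%O]| <= n ->
    (x < y)%O -> (g x < g y)%R.
  by move=> x y; apply: (H _ x y (leqnn _)).
elim=> [|n IH] x y Hn Hxy.
  apply: Hc; split => // -[z [Hxz Hzy]].
  move: Hn; rewrite leqn0 cards_eq0 => /eqP/setP/(_ z).
  by rewrite !inE Hxz Hzy.
case: (boolP [exists z, (x < z)%O && (z < y)%O]) => [/existsP [z /andP [Hxz Hzy]]|Hne]; last first.
  apply: Hc; split => // -[z [Hxz Hzy]]; move/negP: Hne; apply.
  by apply/existsP; exists z; rewrite Hxz Hzy.
have Hxy' : (z \in [set w | (x < w)%O && (w < y)%O]) by rewrite inE Hxz Hzy.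
have H1 : #|[set w | (x < w)%O && (w < z)%O]| <= n.
  rewrite -ltnS; apply: leq_trans Hn; apply: proper_card; apply/properP; split.
    by apply/subsetP => w; rewrite !inE => /andP [-> /lt_trans ->].
  by exists z => //; rewrite inE ltxx andbF.
have H2 : #|[set w | (z < w)%O && (w < y)%O]| <= n.
  rewrite -ltnS; apply: leq_trans Hn; apply: proper_card; apply/properP; split.
    by apply/subsetP => w; rewrite !inE => /andP [/(lt_trans Hxz) -> ->].
  by exists z => //; rewrite inE ltxx.
exact: lt_trans (IH _ _ H1 Hxz) (IH _ _ H2 Hzy).
Qed.

Arguments fmin_mem {A}. Arguments fmax_mem {A}.
Arguments fmin_le {A a}. Arguments fmax_ge {A a}.

Theorem proposition2p2 (d : Order.disp_t) (P : finPOrderType d)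
  (R : P -> {fset int}) (HR : forall p : P, R p != fset0) :
  (forall (p : P) (k : int), k \in R p ->
     exists f : P -> int, in_IncR R f /\ f p = k)
  <-> consistent R.
Proof.
split.
  move=> H x y [Hxy _]; split.
    have [f [[Hm Hi] Hf]] := H y _ (fmin_mem (HR y)).
    by rewrite -Hf; apply: le_lt_trans (fmin_le (Hm x)) (Hi _ _ Hxy).
  have [f [[Hm Hi] Hf]] := H x _ (fmax_mem (HR x)).
  by rewrite -Hf; apply: lt_le_trans (Hi _ _ Hxy) (fmax_ge (Hm y)).
move=> Hc p k Hk.
have Ha := @cover_chain _ _ (fun q => fmin (R q)) (fun x y H => (Hc x y H).1).
have Hb := @cover_chain _ _ (fun q => fmax (R q)) (fun x y H => (Hc x y H).2).
have Hab : forall q, (fmin (R q) <= fmax (R q))%R.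
  by move=> q; apply: fmax_ge; apply: fmin_mem.
exists (fun q => if q == p then k else if (p <= q)%O then fmax (R q) else fmin (R q)).
split; last by rewrite eqxx.
split.
  move=> q; case: eqP => [->//|_]; case: ifP => _; [exact: fmax_mem | exact: fmin_mem].
move=> q1 q2 H12 /=.
case: (eqVneq q2 p) => [E|N2].
  subst q2; rewrite (lt_eqF H12).
  have -> : (p <= q1)%O = false.
    by apply/negbTE/negP => Hp; have := lt_le_trans H12 Hp; rewrite ltxx.
  exact: lt_le_trans (Ha _ _ H12) (fmin_le Hk).
case: (eqVneq q1 p) => [E|N1].
  subst q1; rewrite (ltW H12).
  exact: le_lt_trans (fmax_ge Hk) (Hb _ _ H12).
case: ifP => Hp1.
  by rewrite (le_trans Hp1 (ltW H12)); apply: Hb.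
case: ifP => Hp2; last by apply: Ha.
exact: lt_le_trans (Ha _ _ H12) (Hab _).
Qed.
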